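(* Let $p$ be an odd prime, $m$ a positive integer, and let $1,\alpha,\beta\in\mathbb{F}_{p^m}$ be linearly independent over $\mathbb{F}_p$. Let $\eta$ be the quadratic character of $\mathbb{F}_{p^m}$ and $\epsilon_p=e^{2\pi i/p}$. If \[\Big|\sum_{y_1,y_2\in\mathbb{F}_p}\eta(1+y_1\alpha+y_2\beta)\,\epsilon_p^{-y_1y_2}\Big|\neq p,\] then the function $F:\mathbb{F}_{p^m}\times\mathbb{F}_p^2\to\mathbb{F}_p$, \[F(x,y_1,y_2)=\mathrm{Tr}_m(x^2)+\big(y_1+\mathrm{Tr}_m(\alpha x^2)\big)\big(y_2+\mathrm{Tr}_m(\beta x^2)\big),\] is a non-dual-bent function (i.e. $F$ is bent but its dual $F^*$ is not bent).
   Context: $\mathrm{Tr}_m$ is the absolute trace $\mathbb{F}_{p^m}\to\mathbb{F}_p$. Inner product on $\mathbb{F}_{p^m}\times\mathbb{F}_p^2$: $\langle (a,b_1,b_2),(x,y_1,y_2)\rangle=\mathrm{Tr}_m(ax)+b_1y_1+b_2y_2$. Walsh transform of $f:V\to\mathbb{F}_p$ ($\dim V=N$): $\widehat f(b)=\sum_{x\in V}\epsilon_p^{f(x)-\langle b,x\rangle}$; $f$ is bent if $|\widehat f(b)|=p^{N/2}$ for all $b$. For bent $f$ (odd $p$), $\widehat f(b)=\zeta_bp^{N/2}\epsilon_p^{f^*(b)}$ with $\zeta_b\in\{\pm1,\pm i\}$, defining the dual $f^*:V\to\mathbb{F}_p$. A bent function is dual-bent if $f^*$ is bent, and non-dual-bent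 otherwise. *)

(* Defs.v *)
From mathcomp Require Import all_boot all_order all_algebra all_field.
Set Implicit Arguments. Unset Strict Implicit. Unset Printing Implicit Defensive.
Import Order.TTheory GRing.Theory Num.Theory.
Local Open Scope ring_scope.

(* epsilon_p = e^{2 pi i / p} in algC: p.-root (-1) is the p-th root of -1
   of minimal non-negative argument, i.e. e^{i pi / p}; its square is e^{2 pi i/p}. *)
Definition eps (p : nat) : algC := (p.-root (-1)) ^+ 2.

Definition epow (p : nat) (a : 'F_p) : algC := eps p ^+ (val a).

Definition toL (L : finFieldType) (p : nat) (a : 'F_p) : L := (val a)%:R.

Definition trL (L : finFieldType) (p m : nat) (x : L) : L :=
  \sum_(i < m) x ^+ (p ^ i).

(* absolute trace as an element of F_p (the trace lies in the prime field) *)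
Definition Tr (L : finFieldType) (p m : nat) (x : L) : 'F_p :=
  odflt 0 [pick k : 'F_p | toL L k == trL p m x].

Definition eta (L : finFieldType) (x : L) : algC :=
  if x == 0 then 0 else if [exists y : L, y ^+ 2 == x] then 1 else -1.

Definition V (L : finFieldType) (p : nat) := (L * ('F_p * 'F_p))%type.

Definition ip (L : finFieldType) (p m : nat) (u v : V L p) : 'F_p :=
  Tr p m (u.1 * v.1) + u.2.1 * v.2.1 + u.2.2 * v.2.2.

Definition walsh (L : finFieldType) (p m : nat) (f : V L p -> 'F_p) (b : V L p) : algC :=
  \sum_(x : V L p) epow (f x - ip m b x).

Definition bent (L : finFieldType) (p m : nat) (f : V L p -> 'F_p) : Prop :=
  forall b : V L p, `|walsh m f b| = sqrtC ((p ^ (m + 2))%:R).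

(* dual: W_f(b) = zeta_b p^{N/2} eps^{f*(b)}, zeta_b in {1,-1,i,-i} *)
Definition dual (L : finFieldType) (p m : nat) (f : V L p -> 'F_p) (b : V L p) : 'F_p :=
  odflt 0 [pick k : 'F_p |
    [exists z : 'I_4, walsh m f b == ('i ^+ z) * sqrtC ((p ^ (m + 2))%:R) * epow k]].

Definition dual_bent (L : finFieldType) (p m : nat) (f : V L p -> 'F_p) : Prop :=
  bent m f /\ bent m (dual m f).

Definition non_dual_bent (L : finFieldType) (p m : nat) (f : V L p -> 'F_p) : Prop :=
  bent m f /\ ~ bent m (dual m f).

(* Main.v *)
Require Import Defs.
From mathcomp Require Import all_boot all_order all_algebra all_field.
From mathcomp Require Import ring cyclic.
Import Order.TTheory GRing.Theory Num.Theory.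
Local Open Scope ring_scope.
Set Implicit Arguments. Unset Strict Implicit. Unset Printing Implicit Defensive.

Lemma char_sum (Gs : finZmodType) (chi : Gs -> algC) (x0 : Gs) :
  (forall x y, chi (x + y) = chi x * chi y) -> chi x0 != 1 ->
  \sum_x chi x = 0.
Proof.
move=> chiD ch1.
have h : \sum_x chi x = chi x0 * \sum_x chi x.
  rewrite {1}(reindex_inj (addIr x0)) /= mulr_sumr; apply: eq_bigr => x _.
  by rewrite chiD mulrC.
apply/eqP; move/eqP: h; rewrite -subr_eq0 -{1}(mul1r (\sum_x chi x)) -mulrBl.
by rewrite mulf_eq0 subr_eq0 eq_sym (negbTE ch1).
Qed.

Lemma two_neq0_pchar (R : nzRingType) (p : nat) :
  p \in [pchar R] -> odd p -> (2%:R : R) != 0.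
Proof.
move=> pc po; rewrite -(GRing.dvdn_pcharf pc); apply/negP => /(@dvdn_leq _ 2 isT) h.
have p1 : (1 < p)%N by apply: prime_gt1; apply: (GRing.pcharf_prime pc).
have p2 : p = 2%N by apply/eqP; rewrite eqn_leq h p1.
by move: po; rewrite p2.
Qed.

Section Eps.
Variable p : nat.
Hypothesis pP : prime p.
Hypothesis podd : odd p.

Let p_gt0 : (0 < p)%N. Proof. exact: prime_gt0. Qed.
Let p_gt1 : (1 < p)%N. Proof. exact: prime_gt1. Qed.

Lemma rootN1_p : (p.-root (-1 : algC)) ^+ p = -1.
Proof. by rewrite rootCK. Qed.

Lemma eps_p : eps p ^+ p = 1.
Proof. by rewrite /eps -exprM mulnC exprM rootN1_p expr2 mulrNN mulr1. Qed.

Lemma eps_neq1 : eps p != 1.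
Proof.
rewrite /eps sqrf_eq1; apply/negP => /orP[/eqP r1 | /eqP r1].
  have := rootN1_p; rewrite r1 expr1n => /eqP.
  by rewrite -subr_eq0 opprK -(natrD _ 1 1) pnatr_eq0.
have [w wP] := C_prim_root_exists p_gt0.
have wp : w ^+ p = 1 by apply: prim_expr_order.
have wn1 : w != 1.
  apply/negP => /eqP w1.
  have := eq_prim_root_expr wP 1 0; rewrite expr1 expr0 w1 eqxx => /esym.
  by rewrite !modn_small.
pose y := if 0 <= 'Im (- w) then - w else - w^*.
have yp : y ^+ p = -1.
  rewrite /y; case: ifP => _; rewrite exprNn -signr_odd podd expr1 ?wp.
    by rewrite mulr1.
  by rewrite -rmorphXn wp rmorph1 mulr1.
have yIm : 0 <= 'Im y.
  rewrite /y; case: ifP => // /negbT; rewrite !raddfN /= Im_conj opprK oppr_ge0.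
  by rewrite -real_ltNge ?Creal_Im ?rpred0 // => /ltW.
have := rootC_Re_max p_gt0 yp yIm; rewrite r1.
have -> : 'Re y = - 'Re w by rewrite /y; case: ifP => _; rewrite raddfN /= ?Re_conj.
rewrite raddfN /= (Creal_ReP 1 _) ?rpred1 // lerN2 => Rw1.
have nw : `|w| = 1.
  apply/eqP; rewrite -(@pexpr_eq1 _ _ p) ?normr_ge0 // -normrX wp normr1.
  done.
have := leif_Re_Creal w; rewrite nw => /leifP.
case: ifP => [w0 _ | _].
  by move: nw; rewrite ger0_norm // => /eqP; rewrite (negbTE wn1).
by move=> h; move: Rw1; rewrite real_leNgt ?rpred1 ?Creal_Re // h.
Qed.

Lemma eps_prim : p.-primitive_root (eps p).
Proof.
have [w wP] := C_prim_root_exists p_gt0.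
have [i ei] := prim_rootP wP eps_p.
have i0 : (0 < i)%N.
  rewrite lt0n; apply/negP => /eqP i0; move: eps_neq1; rewrite ei i0 expr0 eqxx //.
have := exp_prim_root wP i; rewrite -ei.
suff -> : gcdn i p = 1%N by rewrite divn1.
apply/eqP; rewrite -/(coprime i p) coprime_sym prime_coprime //; apply/negP => /dvdn_leq.
by move/(_ i0); rewrite leqNgt ltn_ord.
Qed.

Lemma Fp_lt (a : 'F_p) : (val a < p)%N.
Proof. by have := ltn_ord a; rewrite [in X in (_ < X)%N]Fp_cast. Qed.

Lemma Fp_natE (a : 'F_p) : (val a)%:R = a.
Proof. by apply: val_inj; rewrite /= val_Fp_nat // modn_small // Fp_lt. Qed.

Lemma val_FpD (a b : 'F_p) : val (a + b) = ((val a + val b) %% p)%N.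
Proof. by rewrite -val_Fp_nat // natrD !Fp_natE. Qed.

Lemma epowD (a b : 'F_p) : epow (a + b) = epow a * epow b.
Proof. by rewrite /epow val_FpD expr_mod ?eps_p // exprD. Qed.

Lemma epow0 : epow (0 : 'F_p) = 1.
Proof. by rewrite /epow expr0. Qed.

Lemma epow1 : epow (1 : 'F_p) = eps p.
Proof.
rewrite /epow (_ : val (1 : 'F_p) = 1%N) ?expr1 //.
Qed.

Lemma epow_neq0 (a : 'F_p) : epow a != 0.
Proof.
apply/negP => /eqP h; have := epowD a (- a); rewrite subrr epow0 h mul0r.
by move/eqP; rewrite oner_eq0.
Qed.

Lemma epowN (a : 'F_p) : epow (- a) = (epow a)^-1.
Proof.
by apply: (mulfI (epow_neq0 a)); rewrite -epowD subrr epow0 divff ?epow_neq0.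
Qed.

Lemma epow_eq1 (a : 'F_p) : epow a = 1 -> a = 0.
Proof.
move=> /eqP; rewrite /epow -(expr0 (eps p)) (eq_prim_root_expr eps_prim) mod0n.
by rewrite modn_small ?Fp_lt // => /eqP h; apply: val_inj.
Qed.

Lemma norm_eps : `|eps p| = 1.
Proof.
apply/eqP; rewrite -(@pexpr_eq1 _ _ p) ?normr_ge0 // -normrX eps_p normr1 //.
Qed.

Lemma norm_epow (a : 'F_p) : `|epow a| = 1.
Proof. by rewrite /epow normrX norm_eps expr1n. Qed.

Lemma conj_epow (a : 'F_p) : (epow a)^* = epow (- a).
Proof.
rewrite epowN; apply: (mulfI (epow_neq0 a)); rewrite divff ?epow_neq0 //.
by rewrite -normCK norm_epow expr1n.
Qed.


Lemma sum_epow_mul (u : 'F_p) :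
  \sum_(k : 'F_p) epow (u * k) = if u == 0 then p%:R else 0.
Proof.
have [-> | u0] := eqVneq u 0.
  under eq_bigr do rewrite mul0r epow0.
  by rewrite sumr_const card_Fp.
apply: (@char_sum _ (fun k => epow (u * k)) u^-1).
  by move=> x y; rewrite mulrDr epowD.
by rewrite divff // epow1 eps_neq1.
Qed.

Lemma sum_epow_bil (b1 b2 : 'F_p) :
  \sum_(z1 : 'F_p) \sum_(z2 : 'F_p) epow (z1 * z2 - b1 * z1 - b2 * z2)
  = p%:R * epow (- (b1 * b2)).
Proof.
have e z1 z2 : (z1 + b2) * (z2 + b1) - b1 * (z1 + b2) - b2 * (z2 + b1)
   = z1 * z2 + - (b1 * b2) by ring.
rewrite (reindex_inj (addIr b2)) /=.
under eq_bigr => z1 _.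
  rewrite (reindex_inj (addIr b1)) /=.
  under eq_bigr => z2 _ do rewrite e epowD.
  rewrite -mulr_suml sum_epow_mul.
  over.
by rewrite -mulr_suml (bigD1 0) //= big1 ?addr0 // => i /negbTE ->.
Qed.
End Eps.



Section Field.
Variables (p m : nat) (L : finFieldType).
Hypothesis pP : prime p.
Hypothesis podd : odd p.
Hypothesis m_pos : (0 < m)%N.
Hypothesis cardL : #|L| = (p ^ m)%N.

Let p_gt0 : (0 < p)%N. Proof. exact: prime_gt0. Qed.
Let p_gt1 : (1 < p)%N. Proof. exact: prime_gt1. Qed.

Lemma pcharL : p \in [pchar L].
Proof. exact: card_finPcharP cardL pP. Qed.

Lemma toLD (a b : 'F_p) : toL L (a + b) = toL L a + toL L b.
Proof. by rewrite /toL val_FpD // GRing.natr_mod_pchar ?pcharL // natrD. Qed.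

Lemma val_FpM (a b : 'F_p) : val (a * b) = ((val a * val b) %% p)%N.
Proof. by rewrite -val_Fp_nat // natrM !Fp_natE. Qed.

Lemma toLM (a b : 'F_p) : toL L (a * b) = toL L a * toL L b.
Proof. by rewrite /toL val_FpM GRing.natr_mod_pchar ?pcharL // natrM. Qed.

Lemma toL0 : toL L (0 : 'F_p) = 0.
Proof. by rewrite /toL. Qed.

Lemma toL1 : toL L (1 : 'F_p) = 1.
Proof.
rewrite /toL (_ : val (1 : 'F_p) = 1%N) //.
Qed.

Lemma toLN (a : 'F_p) : toL L (- a) = - toL L a.
Proof. by apply/eqP; rewrite -addr_eq0 -toLD addNr toL0. Qed.

Lemma toL_inj : injective (fun a : 'F_p => toL L a).
Proof.
move=> a b; rewrite /toL => e; apply: val_inj.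
wlog le : a b e / (val a <= val b)%N.
  by move=> W; case: (leqP (val a) (val b)) => h; [|symmetry]; apply: W => //; apply: ltnW.
have hd : (p %| val b - val a)%N by rewrite (GRing.dvdn_pcharf pcharL) natrB // e subrr.
have hlt : (val b - val a < p)%N := leq_ltn_trans (leq_subr _ _) (Fp_lt pP b).
have : (val b - val a == 0)%N.
  case: (posnP (val b - val a)) => [/eqP//|h].
  by have := dvdn_leq h hd; rewrite leqNgt hlt.
by rewrite subn_eq0 => h; apply/eqP; rewrite eqn_leq le h.
Qed.

Lemma toL_frob (a : 'F_p) : toL L a ^+ p = toL L a.
Proof. by rewrite /toL -(GRing.pFrobenius_autE pcharL) rmorph_nat. Qed.

Lemma toL_frobn (a : 'F_p) n : toL L a ^+ (p ^ n) = toL L a.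
Proof. by elim: n => [|n IH]; rewrite ?expr1 // expnSr exprM IH toL_frob. Qed.

Lemma frobDn (x y : L) n : (x + y) ^+ (p ^ n) = x ^+ (p ^ n) + y ^+ (p ^ n).
Proof.
elim: n => [|n IH]; rewrite ?expr1 // expnSr !exprM IH.
by rewrite -!(GRing.pFrobenius_autE pcharL) rmorphD.
Qed.

Lemma primefield (y : L) : y ^+ p = y -> exists a : 'F_p, toL L a = y.
Proof.
move=> yp; have [a /eqP ea | ny] := pickP (fun a : 'F_p => toL L a == y).
  by exists a.
exfalso.
pose rs := y :: [seq toL L a | a <- enum 'F_p].
pose P : {poly L} := 'X^p - 'X.
have szP : size P = p.+1.
  by rewrite /P size_polyDl ?size_polyXn // size_polyN size_polyX ltnS.
have P0 : P != 0 by rewrite -size_poly_eq0 szP.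
have := max_poly_roots P0 (rs := rs).
rewrite szP /= size_map -cardE card_Fp // ltnn => H; suff: false by []; apply: H.
  apply/andP; split; first by rewrite /root /P !hornerE yp subrr.
  by apply/allP => z /mapP[a _ ->]; rewrite /root /P !hornerE toL_frob subrr.
rewrite map_inj_uniq ?enum_uniq ?andbT; last exact: toL_inj.
by apply/mapP => -[a _ ea]; move: (ny a); rewrite /= ea eqxx.
Qed.

Lemma trLD (x y : L) : trL p m (x + y) = trL p m x + trL p m y.
Proof. by rewrite /trL -big_split; apply: eq_bigr => i _; rewrite frobDn. Qed.

Lemma trL_scal (a : 'F_p) (x : L) : trL p m (toL L a * x) = toL L a * trL p m x.
Proof.
by rewrite /trL mulr_sumr; apply: eq_bigr => i _; rewrite exprMn toL_frobn.
Qed.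

Lemma trL_frob (x : L) : trL p m x ^+ p = trL p m x.
Proof.
rewrite /trL -(GRing.pFrobenius_autE pcharL) rmorph_sum /=.
under eq_bigr do rewrite (GRing.pFrobenius_autE pcharL) -exprM -expnSr.
case: m m_pos cardL => // m' _ cL.
rewrite big_ord_recr big_ord_recl /= -cL expf_card expr1 addrC.
by congr (_ + _); apply: eq_bigr => i _; rewrite /bump /=.
Qed.

Lemma TrE (x : L) : toL L (Tr p m x) = trL p m x.
Proof.
rewrite /Tr; case: pickP => [k /eqP -> //| none].
have [a ea] := primefield (trL_frob x).
by move: (none a); rewrite /= ea eqxx.
Qed.

Lemma TrD (x y : L) : Tr p m (x + y) = Tr p m x + Tr p m y.
Proof. by apply: toL_inj; rewrite /= toLD !TrE trLD. Qed.

Lemma Tr_scal (a : 'F_p) (x : L) : Tr p m (toL L a * x) = a * Tr p m x.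
Proof. by apply: toL_inj; rewrite /= toLM !TrE trL_scal. Qed.

Lemma Tr0 : Tr p m (0 : L) = 0.
Proof. by apply: toL_inj; rewrite /= TrE toL0 /trL big1 // => i _; rewrite expr0n expn_eq0 eqn0Ngt p_gt0. Qed.

Lemma TrN (x : L) : Tr p m (- x) = - Tr p m x.
Proof. by apply/eqP; rewrite -addr_eq0 -TrD addNr Tr0. Qed.

Lemma Tr_nontriv : exists x : L, Tr p m x != 0.
Proof.
pose Q : {poly L} := \sum_(i < m) 'X^(p ^ i).
have QE x : Q.[x] = trL p m x.
  by rewrite /Q horner_sum; apply: eq_bigr => i _; rewrite hornerXn.
have Q0 : Q != 0.
  apply/negP => /eqP /(congr1 (fun q : {poly L} => q`_1)).
  rewrite coef_sum coef0 (bigD1 (Ordinal m_pos)) //= coefXn expn0 eqxx big1 ?addr0.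
    by move/eqP; rewrite oner_eq0.
  move=> i i0; rewrite coefXn -{1}(expn0 p) eqn_exp2l //.
  by case: i i0 => -[|n] //.
have szQ : (size Q <= (p ^ m.-1).+1)%N.
  apply: leq_trans (size_sum _ _ _) _; apply/bigmax_leqP => i _.
  by rewrite size_polyXn ltnS leq_pexp2l // -ltnS prednK.
have [x hx | allr] := pickP (fun x : L => trL p m x != 0).
  by exists x; apply/negP => /eqP h; move: hx; rewrite -TrE h toL0 eqxx.
exfalso.
have := max_poly_roots Q0 (rs := enum L).
rewrite enum_uniq -cardE cardL => H.
have : (p ^ m < (p ^ m.-1).+1)%N.
  apply: leq_trans szQ; apply: H => //; apply/allP => x _.
  by rewrite /root QE; move: (allr x) => /= /negbFE.
by rewrite -(prednK m_pos) ltnS expnS leqNgt -{1}(mul1n (p ^ m.-1)%N) ltn_pmul2r ?expn_gt0 ?p_gt0 // p_gt1.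
Qed.

Lemma L_odd : odd #|L|.
Proof. by rewrite cardL oddX podd orbT. Qed.

Lemma two_neq0 : (2%:R : L) != 0.
Proof.
rewrite -(GRing.dvdn_pcharf pcharL); apply/negP => /(@dvdn_leq _ 2 isT) h.
have p2 : p = 2%N by apply/eqP; rewrite eqn_leq h p_gt1.
by move: podd; rewrite p2.
Qed.

Lemma Lm1_even : odd (#|L|.-1) = false.
Proof.
have := L_odd; have := finNzRing_gt1 L; case: #|L| => // n _ /=.
by case: (odd n).
Qed.

Lemma prim_g : exists g : L, (#|L|.-1).-primitive_root g.
Proof.
have n_gt0 : (0 < #|L|.-1)%N by rewrite -ltnS prednK ?finNzRing_gt1 // ltnW ?finNzRing_gt1.
have : has (#|L|.-1).-primitive_root (enum (predC1 (0 : L))).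
  apply: has_prim_root => //; last by rewrite -cardE cardC1.
  - apply/allP => x; rewrite mem_enum /= => x0; rewrite unity_rootE.
    apply/eqP; apply: (mulIf x0); rewrite -exprSr prednK ?expf_card ?mul1r //.
    exact: ltnW (finNzRing_gt1 L).
  - exact: enum_uniq.
by case/hasP => g _ gP; exists g.
Qed.

Lemma eta0 : eta (0 : L) = 0.
Proof. by rewrite /eta eqxx. Qed.

Lemma eta_sq (x : L) : x != 0 -> eta (x ^+ 2) = 1.
Proof.
move=> x0; rewrite /eta sqrf_eq0 (negbTE x0).
by case: existsP => // -[]; exists x.
Qed.

Lemma eta_pm (x : L) : x != 0 -> eta x = 1 \/ eta x = -1.
Proof. by move=> x0; rewrite /eta (negbTE x0); case: existsP; [left|right]. Qed.

Lemma eta_sqr1 (x : L) : x != 0 -> eta x ^+ 2 = 1.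
Proof. by move=> /eta_pm [] ->; rewrite ?expr1n ?sqrrN ?expr1n. Qed.

Lemma etaM (x y : L) : eta (x * y) = eta x * eta y.
Proof.
have [-> | x0] := eqVneq x 0; first by rewrite mul0r eta0 mul0r.
have [-> | y0] := eqVneq y 0; first by rewrite mulr0 eta0 mulr0.
have [g gP] := prim_g.
have n_gt0 := prim_order_gt0 gP.
have gn : g ^+ #|L|.-1 = 1 by apply: prim_expr_order.
have g0 : g != 0 by apply/negP => /eqP g0; move: gn; rewrite g0 expr0n gtn_eqF // => /eqP; rewrite eq_sym oner_eq0.
have unit_x (z : L) : z != 0 -> z ^+ #|L|.-1 = 1.
  move=> z0; apply: (mulIf z0); rewrite -exprSr prednK ?expf_card ?mul1r //.
  exact: ltnW (finNzRing_gt1 L).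
have etag k : eta (g ^+ k) = (-1) ^+ k.
  rewrite /eta expf_eq0 (negbTE g0) andbF -signr_odd.
  case: existsP => [[w /eqP ey] | ny].
    have w0 : w != 0 by apply/negP => /eqP w0; move: ey; rewrite w0 expr0n /= => /eqP; rewrite eq_sym expf_eq0 (negbTE g0) andbF.
    have [j ej] := prim_rootP gP (unit_x w w0).
    move: ey; rewrite ej -exprM => /eqP; rewrite (eq_prim_root_expr gP) => /eqP h.
    have : odd (val j * 2 %% #|L|.-1) = odd (k %% #|L|.-1) by rewrite h.
    by rewrite !odd_mod ?Lm1_even // oddM andbF => <-.
  case: (boolP (odd k)) => //= ok; exfalso; apply: ny.
  exists (g ^+ k./2); rewrite -exprM; apply/eqP; congr (g ^+ _).
  by rewrite -{2}(odd_double_half k) (negbTE ok) add0n -muln2.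
have [i ei] := prim_rootP gP (unit_x x x0).
have [j ej] := prim_rootP gP (unit_x y y0).
by rewrite ei ej -exprD !etag exprD.
Qed.

Lemma eta_inv (x : L) : eta x^-1 = eta x.
Proof.
have [-> | x0] := eqVneq x 0; first by rewrite invr0.
have := etaM x x^-1; rewrite divff // /eta oner_eq0.
case: existsP => [_ | []]; last by exists 1; rewrite expr1n.
have := eta_pm x0; rewrite /eta (negbTE x0) invr_eq0 (negbTE x0).
by case=> ->; case: existsP => //= _; rewrite ?mul1r ?mulr1 => h; first [exact: h | exact: esym h].
Qed.

Lemma card_sqrt (t : L) :
  (#|[pred x : L | x ^+ 2 == t]|%:R : algC) = 1 + eta t.
Proof.
have [-> | t0] := eqVneq t 0.
  rewrite eta0 addr0 (@eq_card _ _ (pred1 0)) ?card1 // => x.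
  by rewrite !inE sqrf_eq0.
rewrite /eta (negbTE t0); case: existsP => [[y /eqP ey] | ny].
  rewrite (@eq_card _ _ (pred2 y (- y))) ?card2; last first.
    by move=> x; rewrite !inE -ey eqf_sqr.
  have -> : y != - y.
    apply/negP => /eqP e; move: t0; rewrite -ey.
    have : y + y == 0 by rewrite {1}e addNr.
    rewrite -mulr2n -mulr_natr mulf_eq0 (negbTE two_neq0) orbF => /eqP ->.
    by rewrite expr0n eqxx.
  by rewrite -(natrD _ 1 1).
rewrite eq_card0 ?subrr // => x; rewrite !inE; apply/negP => /eqP ex.
by apply: ny; exists x; rewrite ex.
Qed.

Lemma sum_sq (f : L -> algC) :
  \sum_(x : L) f (x ^+ 2) = \sum_(t : L) (1 + eta t) * f t.
Proof.
rewrite (partition_big (fun x : L => x ^+ 2) xpredT) //.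
apply: eq_bigr => t _.
rewrite (eq_bigr (fun _ => f t)); last by move=> x /eqP ->.
by rewrite sumr_const -card_sqrt mulr_natl.
Qed.

Definition psi (x : L) : algC := epow (Tr p m x).

Lemma psiD (x y : L) : psi (x + y) = psi x * psi y.
Proof. by rewrite /psi TrD epowD. Qed.

Lemma psi0 : psi 0 = 1.
Proof. by rewrite /psi Tr0 epow0. Qed.

Lemma conj_psi (x : L) : (psi x)^* = psi (- x).
Proof. by rewrite /psi conj_epow // TrN. Qed.

Lemma sum_psi_mul (c : L) :
  \sum_(x : L) psi (c * x) = if c == 0 then #|L|%:R else 0.
Proof.
have [-> | c0] := eqVneq c 0.
  by under eq_bigr do rewrite mul0r psi0; rewrite sumr_const.
have [x1 hx1] := Tr_nontriv.
apply: (@char_sum _ (fun x => psi (c * x)) (c^-1 * x1)).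
  by move=> x y; rewrite mulrDr psiD.
rewrite mulrA divff // mul1r /psi; apply/negP => /eqP /(epow_eq1 pP podd) h.
by move: hx1; rewrite h eqxx.
Qed.

Definition Gs := \sum_(x : L) psi (x ^+ 2).

Lemma sum_psi_sq (c : L) : c != 0 -> \sum_(x : L) psi (c * x ^+ 2) = eta c * Gs.
Proof.
have H d : d != 0 -> \sum_(x : L) psi (d * x ^+ 2) = \sum_(t : L) eta t * psi (d * t).
  move=> d0; rewrite (sum_sq (fun t => psi (d * t))).
  under eq_bigr do rewrite mulrDl mul1r.
  by rewrite big_split /= sum_psi_mul (negbTE d0) add0r.
move=> c0; rewrite (H c c0).
have G1 : Gs = \sum_t eta t * psi (1 * t).
  by rewrite -H ?oner_neq0 //; apply: eq_bigr => x _; rewrite mul1r.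
rewrite (reindex_inj (mulfI (invr_neq0 c0))) /= G1 mulr_sumr.
by apply: eq_bigr => t _; rewrite etaM eta_inv (mulrA c) divff // !mul1r mulrA.
Qed.

Lemma sum_psi_quad (c a : L) : c != 0 ->
  \sum_(x : L) psi (c * x ^+ 2 - a * x) = eta c * psi (- (a ^+ 2 / (4%:R * c))) * Gs.
Proof.
move=> c0; pose d := a / (2%:R * c).
have e x : c * (x + d) ^+ 2 - a * (x + d) = c * x ^+ 2 + - (a ^+ 2 / (4%:R * c)).
  rewrite /d; field.
  by rewrite c0 two_neq0 andbT /= (_ : 4%:R = 2%:R * 2%:R :> L) ?mulf_neq0 ?two_neq0 // -natrM.
rewrite (reindex_inj (addIr d)) /=.
under eq_bigr do rewrite e psiD.
by rewrite -mulr_suml sum_psi_sq // mulrAC.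
Qed.

Lemma G_conj : Gs^* = eta (-1 : L) * Gs.
Proof.
rewrite /Gs rmorph_sum /= -sum_psi_sq ?oppr_eq0 ?oner_neq0 //.
by apply: eq_bigr => x _; rewrite conj_psi mulN1r.
Qed.

Lemma G_norm : Gs * Gs^* = #|L|%:R.
Proof.
have e (x y : L) : (x + y) ^+ 2 + - y ^+ 2 = x ^+ 2 + (2%:R * x) * y by ring.
have -> : Gs * Gs^* = \sum_(y : L) \sum_(x : L) psi (x ^+ 2) * psi ((2%:R * x) * y).
  rewrite {2}/Gs rmorph_sum /= mulr_sumr; apply: eq_bigr => y _.
  rewrite /Gs mulr_suml (reindex_inj (addIr y)) /=; apply: eq_bigr => x _.
  by rewrite conj_psi -psiD e psiD.
rewrite exchange_big /=.
under eq_bigr do rewrite -mulr_sumr sum_psi_mul.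
rewrite (bigD1 0) //= mulr0 eqxx expr0n /= psi0 mul1r big1 ?addr0 // => x x0.
by rewrite mulf_eq0 (negbTE two_neq0) (negbTE x0) mulr0.
Qed.

Lemma G_sq : Gs ^+ 2 = eta (-1 : L) * #|L|%:R.
Proof.
have e1 : eta (-1 : L) ^+ 2 = 1 by rewrite eta_sqr1 // oppr_eq0 oner_neq0.
rewrite -G_norm G_conj.
transitivity (eta (-1 : L) ^+ 2 * Gs ^+ 2); first by rewrite e1 mul1r.
ring.
Qed.

Lemma G_abs : `|Gs| = sqrtC (#|L|%:R).
Proof. by rewrite -[LHS]sqrCK ?normr_ge0 // normCK G_norm. Qed.

Lemma cardL_gt0 : (0 < #|L|)%N.
Proof. by rewrite cardL expn_gt0 p_gt0. Qed.

Lemma sq_neq0 : sqrtC (#|L|%:R : algC) != 0.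
Proof. by rewrite sqrtC_eq0 pnatr_eq0 -lt0n cardL_gt0. Qed.

Lemma zeta (c : L) : c != 0 ->
  exists z : 'I_4, eta c * Gs = 'i ^+ z * sqrtC (#|L|%:R).
Proof.
move=> c0; set s := sqrtC _.
pose zt := eta c * Gs / s.
have ez : eta c * Gs = zt * s by rewrite /zt divfK // sq_neq0.
have zt2 : zt ^+ 2 = eta (-1 : L).
  rewrite /zt !exprMn eta_sqr1 // mul1r G_sq exprVn sqrtCK -mulrA divff ?mulr1 //.
  by rewrite pnatr_eq0 -lt0n cardL_gt0.
have ii : 'i ^+ 2 = -1 :> algC by rewrite expr2 mulCii.
have m10 : (-1 : L) != 0 by rewrite oppr_eq0 oner_neq0.
rewrite ez; have [e1 | e1] := eta_pm m10; rewrite e1 in zt2.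
  move/eqP: zt2; rewrite sqrf_eq1 => /orP[] /eqP ->.
    by exists (Ordinal (isT : (0 < 4)%N)); rewrite expr0.
  by exists (Ordinal (isT : (2 < 4)%N)); rewrite ii.
have : (zt * 'i) ^+ 2 == 1 by rewrite exprMn zt2 ii mulrNN mulr1.
have zE : zt = - (zt * 'i) * 'i by rewrite mulNr -mulrA mulCii mulrN1 opprK.
rewrite sqrf_eq1 => /orP[] /eqP h; rewrite zE h.
  by exists (Ordinal (isT : (3 < 4)%N)); rewrite mulN1r exprS ii mulrN1.
by exists (Ordinal (isT : (1 < 4)%N)); rewrite opprK mul1r expr1.
Qed.


Lemma epowMn (a : 'F_p) n : epow (a *+ n) = epow a ^+ n.
Proof. by elim: n => [|n IH]; rewrite ?mulr0n ?epow0 // mulrS epowD // IH exprS. Qed.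

Lemma epow_inj4 (k k0 : 'F_p) (z z0 : nat) (S : algC) : S != 0 ->
  'i ^+ z * S * epow k = 'i ^+ z0 * S * epow k0 -> k = k0.
Proof.
move=> S0 h.
have i4 (n : nat) : ('i ^+ n) ^+ 4 = 1 :> algC.
  have ii2 : 'i ^+ 2 = -1 :> algC by rewrite expr2 mulCii.
  by rewrite -exprM mulnC exprM (_ : 'i ^+ 4 = 1) ?expr1n // (exprM _ 2 2) ii2 sqrrN expr1n.
have : (epow k) ^+ 4 = (epow k0) ^+ 4.
  have := congr1 (fun x => x ^+ 4) h; rewrite !exprMn !i4 !mul1r => /mulfI; apply.
  by rewrite expf_neq0.
rewrite -!epowMn => h4.
have e : epow ((k - k0) *+ 4) = 1.
  by rewrite mulrnBl epowD // epowN // h4 divff ?epow_neq0.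
move/(epow_eq1 pP podd): e; rewrite -mulr_natr => /eqP; rewrite mulf_eq0.
case/orP => [/eqP/subr0_eq // | ].
have t := two_neq0_pchar (pchar_Fp pP) podd.
by rewrite (natrM _ 2 2) mulf_eq0 orbb (negbTE t).
Qed.


Lemma sum_V (h : V L p -> algC) :
  \sum_(v : V L p) h v = \sum_(x : L) \sum_(y1 : 'F_p) \sum_(y2 : 'F_p) h (x, (y1, y2)).
Proof.
symmetry.
rewrite (eq_bigr (fun x => \sum_(q : 'F_p * 'F_p) h (x, q))); last first.
  by move=> x _; rewrite pair_bigA; apply: eq_bigr => -[].
by rewrite pair_bigA; apply: eq_bigr => -[].
Qed.

Lemma sum_shift2 (g : 'F_p -> 'F_p -> algC) (A B : 'F_p) :
  \sum_(y1 : 'F_p) \sum_(y2 : 'F_p) g (y1 + A) (y2 + B) = \sum_(z1 : 'F_p) \sum_(z2 : 'F_p) g z1 z2.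
Proof.
symmetry; rewrite (reindex_inj (addIr A)); apply: eq_bigr => y1 _.
by rewrite (reindex_inj (addIr B)).
Qed.

Variables alpha beta : L.
Hypothesis indep : forall a b c : 'F_p,
      toL L a * 1 + toL L b * alpha + toL L c * beta = 0 ->
      [/\ a = 0, b = 0 & c = 0].

Definition Ffun (v : V L p) : 'F_p :=
  Tr p m (v.1 ^+ 2) + (v.2.1 + Tr p m (alpha * v.1 ^+ 2)) * (v.2.2 + Tr p m (beta * v.1 ^+ 2)).

Definition cc (b1 b2 : 'F_p) : L := 1 + toL L b1 * alpha + toL L b2 * beta.

Lemma cc_neq0 b1 b2 : cc b1 b2 != 0.
Proof.
apply/negP => /eqP h.
have /indep [h1 _ _] : toL L (1 : 'F_p) * 1 + toL L b1 * alpha + toL L b2 * beta = 0.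
  by rewrite toL1 mulr1.
by move/eqP: h1; rewrite oner_eq0.
Qed.

Definition Kf (a : L) (b1 b2 : 'F_p) : L := - (a ^+ 2 / (4%:R * cc b1 b2)).

Lemma walshF a b1 b2 : walsh m Ffun (a, (b1, b2)) =
  p%:R * (eta (cc b1 b2) * Gs) * epow (- (b1 * b2) + Tr p m (Kf a b1 b2)).
Proof.
set c := cc b1 b2.
have e x y1 y2 : Ffun (x, (y1, y2)) - ip m (a, (b1, b2)) (x, (y1, y2)) =
   ((y1 + Tr p m (alpha * x ^+ 2)) * (y2 + Tr p m (beta * x ^+ 2))
     - b1 * (y1 + Tr p m (alpha * x ^+ 2)) - b2 * (y2 + Tr p m (beta * x ^+ 2)))
   + Tr p m (c * x ^+ 2 - a * x).
  have -> : c * x ^+ 2 - a * x =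
     x ^+ 2 + toL L b1 * (alpha * x ^+ 2) + toL L b2 * (beta * x ^+ 2) + - (a * x).
    by rewrite /c /cc; ring.
  rewrite !TrD TrN !Tr_scal /Ffun /ip /=; ring.
have inner (A B : 'F_p) : \sum_(y1 : 'F_p) \sum_(y2 : 'F_p)
    epow ((y1 + A) * (y2 + B) - b1 * (y1 + A) - b2 * (y2 + B)) = p%:R * epow (- (b1 * b2)).
  rewrite -(sum_epow_bil pP podd b1 b2).
  exact: (sum_shift2 (fun z1 z2 => epow (z1 * z2 - b1 * z1 - b2 * z2)) A B).
rewrite /walsh sum_V.
under eq_bigr => x _.
  under eq_bigr => y1 _ do under eq_bigr => y2 _ do rewrite e epowD //.
  under eq_bigr do rewrite -mulr_suml.
  rewrite -mulr_suml inner.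
  over.
rewrite -mulr_sumr sum_psi_quad ?cc_neq0 // epowD // /psi /Kf -/c.
ring.
Qed.


Lemma sqrtN : sqrtC ((p ^ (m + 2))%:R : algC) = p%:R * sqrtC (#|L|%:R).
Proof.
rewrite expnD natrM -cardL sqrtCM ?rpred_nat // natrX sqrCK ?ler0n // mulrC.
by [].
Qed.

Lemma norm_eta (x : L) : x != 0 -> `|eta x| = 1.
Proof. by case/eta_pm => ->; rewrite ?normrN normr1. Qed.

Lemma walshF' a b1 b2 : exists z : 'I_4, walsh m Ffun (a, (b1, b2)) =
  'i ^+ z * sqrtC ((p ^ (m + 2))%:R) * epow (- (b1 * b2) + Tr p m (Kf a b1 b2)).
Proof.
have [z hz] := zeta (cc_neq0 b1 b2).
exists z; rewrite walshF hz sqrtN; congr (_ * _); ring.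
Qed.

Lemma bentF : bent m Ffun.
Proof.
move=> [a [b1 b2]]; have [z ->] := walshF' a b1 b2.
rewrite !normrM (norm_epow pP) normrX normCi expr1n mul1r mulr1 ger0_norm //.
by rewrite sqrtC_ge0 ler0n.
Qed.

Lemma sqrtN_neq0 : sqrtC ((p ^ (m + 2))%:R : algC) != 0.
Proof. by rewrite sqrtC_eq0 pnatr_eq0 expn_eq0 negb_and -lt0n p_gt0. Qed.

Lemma dualF a b1 b2 : dual m Ffun (a, (b1, b2)) = - (b1 * b2) + Tr p m (Kf a b1 b2).
Proof.
have [z0 hz0] := walshF' a b1 b2.
rewrite /dual; case: pickP => [k /existsP [z /eqP hz] | none] /=.
  rewrite hz0 in hz; symmetry; exact: epow_inj4 sqrtN_neq0 hz.
exfalso; move: (none (- (b1 * b2) + Tr p m (Kf a b1 b2))) => /= /existsP; apply.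
by exists z0; rewrite hz0.
Qed.


Lemma dual_not_bent :
  `| \sum_(y1 : 'F_p) \sum_(y2 : 'F_p)
      eta (1 + toL L y1 * alpha + toL L y2 * beta) * epow (- (y1 * y2)) | != p%:R ->
  ~ bent m (dual m Ffun).
Proof.
move=> hS hb; move: (hb 0).
have Kc x y1 y2 : Kf x y1 y2 = (- (4%:R * cc y1 y2)^-1) * x ^+ 2 by rewrite /Kf mulNr mulrC.
have four0 : (4%:R : L) != 0.
  by rewrite (_ : 4%:R = 2%:R * 2%:R :> L) ?mulf_neq0 ?two_neq0 // -natrM.
have ec y1 y2 : eta (- (4%:R * cc y1 y2)^-1) = eta (-1 : L) * eta (cc y1 y2).
  rewrite -(mulN1r (_ ^-1)) etaM eta_inv etaM (_ : 4%:R = 2%:R ^+ 2 :> L) ?eta_sq ?two_neq0 ?mul1r //.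
  by rewrite -natrX.
have c'0 y1 y2 : - (4%:R * cc y1 y2)^-1 != 0.
  by rewrite oppr_eq0 invr_eq0 mulf_neq0 ?cc_neq0.
have -> : walsh m (dual m Ffun) 0 = eta (-1 : L) * Gs *
    \sum_(y1 : 'F_p) \sum_(y2 : 'F_p) eta (cc y1 y2) * epow (- (y1 * y2)).
  rewrite /walsh sum_V.
  under eq_bigr => x _ do under eq_bigr => y1 _ do under eq_bigr => y2 _ do
    rewrite /ip /= !mul0r Tr0 !addr0 subr0 dualF epowD // Kc -/(psi _).
  rewrite exchange_big /= mulr_sumr; apply: eq_bigr => y1 _.
  rewrite exchange_big /= mulr_sumr; apply: eq_bigr => y2 _.
  rewrite -mulr_sumr sum_psi_sq // ec; ring.
rewrite !normrM norm_eta ?oppr_eq0 ?oner_neq0 // mul1r G_abs sqrtN mulrC => /(mulIf sq_neq0) h.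
by move: hS; rewrite -h /cc eqxx.
Qed.

End Field.

Theorem corollary2 (p m : nat) (L : finFieldType)
  (alpha beta : L)
  (p_prime : prime p) (p_odd : odd p) (m_pos : (0 < m)%N)
  (cardL : #|L| = (p ^ m)%N)
  (indep : forall a b c : 'F_p,
      toL L a * 1 + toL L b * alpha + toL L c * beta = 0 ->
      [/\ a = 0, b = 0 & c = 0])
  (hS : `| \sum_(y1 : 'F_p) \sum_(y2 : 'F_p)
            eta (1 + toL L y1 * alpha + toL L y2 * beta) * epow (- (y1 * y2)) |
        != (p%:R : algC)) :
  non_dual_bent m
    (fun v : V L p =>
       Tr p m (v.1 ^+ 2) + (v.2.1 + Tr p m (alpha * v.1 ^+ 2)) * (v.2.2 + Tr p m (beta * v.1 ^+ 2))).
Proof.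
split.
  exact: (bentF p_prime p_odd m_pos cardL indep).
exact: (dual_not_bent p_prime p_odd m_pos cardL indep hS).
Qed.
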